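(* Let $H=(T_1,\dots,T_n,p_1,\dots,p_n)$ be a strategic game equipped with mixed strategies as described in the context. (i) If $\mathbf{MD}(\beta)$ holds for all $\beta<\alpha$, then $\overline{MGS}^{\alpha}=\overline{MLS}^{\alpha}$. In particular, if $\mathbf{MD}(\alpha)$ holds for all ordinals $\alpha$, then the outcomes of $\overline{MGS}$ and $\overline{MLS}$ coincide. (ii) If $\mathbf{MD}(\alpha)$ holds for all ordinals $\alpha$, then $\overline{MLS}$ is order independent. (iii) If $\mathbf{MD}(\beta)$ holds for all $\beta<\alpha+1$, then $MLS^{\alpha}=\overline{MLS}^{\alpha}$. In particular, if $\mathbf{MD}(\alpha)$ holds for all ordinals $\alpha$, then the outcome of $MLS$ exists and equals the outcome of $\overline{MLS}$.
   Context: A restriction of $H$ is $G=(S_1,\dots,S_n)$ with $S_i\subseteq T_i$ (possibly empty), ordered componentwise. Mixed strategies: for each $i$ a set $\Delta T_i\supseteq T_i$ of mixed strategies is given, and for each $S_i\subseteq T_i$ a set $\Delta S_i\subseteq\Delta T_i$ of mixed strategies over $S_i$; each $p_i$ is extended to $p_i:\Delta T_1\times\dots\times\Delta T_n\to\mathbb R$. For $m_i\in\Delta T_i$ and $s_i\in T_i$, $m_i\succ_G s_i$ means $p_i(m_i,s_{-i})>p_i(s_i,s_{-i})$ for all $s_{-i}\in\prod_{j\ne i}S_j$ (vacuous if empty). $MGS(G):=(S_1',\dots,S_n')$ with $S_i':=\{s_i\in T_i\mid\neg\exists m_i\in\Delta T_i:\ m_i\succ_G s_i\}$; $MLS(G):=(S_1',\dots,S_n')$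 with $S_i':=\{s_i\in T_i\mid\neg\exists m_i\in\Delta S_i:\ m_i\succ_G s_i\}$; $\overline{T}(G):=T(G)\cap G$. Iterations: $T^0:=H$, $T^{\alpha+1}:=T(T^\alpha)$, $T^\beta:=\bigcap_{\alpha<\beta}T^\alpha$ for limit $\beta$; outcome $T^{\alpha_T}$, $\alpha_T$ the least $\alpha$ with $T^{\alpha+1}=T^\alpha$. $R$ is a relaxation of $T$ if for all ordinals $\alpha$: (1) $T(R^\alpha)\subseteq R(R^\alpha)$; (2) if $T(R^\alpha)\subseteq R^\alpha$ then $R(R^\alpha)\subseteq R^\alpha$; (3) if $R(R^\alpha)=R^\alpha$ then $T(R^\alpha)=R^\alpha$. $T$ is order independent if the set of outcomes of relaxations of $T$ has at most one element. Property $\mathbf{MD}(\alpha)$: for every relaxation $R$ of $\overline{MLS}$, writing $R^\alpha=(S_1,\dots,S_n)$, every $i$ and every $s_i\in T_i$: if some $m_i\in\Delta T_i$ has $m_i\succ_{R^\alpha}s_i$, then some $m_i^*\in\Delta S_i$ has $m_i^*\succ_{R^\alpha}s_i$. *)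

(* Defs.v *)
From mathcomp Require Import all_boot all_order all_algebra.
From mathcomp Require Import boolp classical_sets reals.

Unset Printing Implicit Defensive.

Import Order.TTheory GRing.Theory Num.Theory.
Local Open Scope classical_set_scope.
Local Open Scope ring_scope.

(** An ordinal alpha is represented by an element [a] of a well-ordered type [O];
    everything below at index [a] depends only on the initial segment of [O]
    below [a], i.e. only on the order type alpha.  "For all ordinals alpha" is
    rendered as "for all well-ordered types O and all a : O". *)
Record wordType := WOrd {
  wo_car :> Type;
  wo_lt : wo_car -> wo_car -> Prop;
  wo_wf : well_founded wo_lt;
  wo_trans : forall x y z, wo_lt x y -> wo_lt y z -> wo_lt x z;
  wo_total : forall x y, wo_lt x y \/ x = y \/ wo_lt y x }.

Arguments wo_lt {w}.

Definition is_pred {O : wordType} (b a : O) :=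
  wo_lt b a /\ ~ (exists c, wo_lt b c /\ wo_lt c a).

Section Game.
(** A strategic game H = (T_1,...,T_n, p_1,...,p_n) with mixed strategies:
    [M i] is the set Delta T_i of mixed strategies of player i,
    [T i] the set T_i of pure strategies (a subset of Delta T_i),
    [p i] the payoff of player i on Delta T_1 x ... x Delta T_n,
    [Delta i S] the set Delta S_i of mixed strategies over S_i (for S_i a subset of T_i). *)
Variables (n : nat) (M : 'I_n -> Type) (T : forall i, set (M i)).
Variables (R : realType) (p : forall i : 'I_n, (forall j, M j) -> R).
Variable (Delta : forall i, set (M i) -> set (M i)).

(** Families of sets; a restriction of H is such a family with G i `<=` T i. *)
Definition restr := forall i : 'I_n, set (M i).

Definition rsub (G G' : restr) := forall i, G i `<=` G' i.

Definition upd (s : forall j, M j) (i : 'I_n) (x : M i) : forall j, M j :=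
  fun j => match i =P j with
           | ReflectT e => eq_rect i M x j e
           | ReflectF _ => s j
           end.

Definition dominates (G : restr) (i : 'I_n) (m si : M i) :=
  forall s : forall j, M j, (forall j, j != i -> G j (s j)) ->
    p i (upd s i si) < p i (upd s i m).

Definition MGS (G : restr) : restr :=
  fun i => [set si | T i si /\ ~ (exists m : M i, dominates G i m si)].

Definition MLS (G : restr) : restr :=
  fun i => [set si | T i si /\ ~ (exists m : M i, Delta i (G i) m /\ dominates G i m si)].

Definition barop (F : restr -> restr) : restr -> restr :=
  fun G i => F G i `&` G i.

(** Transfinite iteration: F^0 = H, F^(b+1) = F(F^b),
    F^a = cap_{b<a} F^b for limit a (written as H cap cap_{b<a} F^b,
    which covers both the zero and the limit case). *)
Definition iter_body {O : wordType} (F : restr -> restr)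
  (a : O) (rec : forall b : O, wo_lt b a -> restr) : restr :=
  match pselect (exists b, is_pred b a) with
  | left h => let bb := cid h in F (rec (sval bb) (proj1 (svalP bb)))
  | right _ => fun i => [set x | T i x /\ forall b (hb : wo_lt b a), rec b hb i x]
  end.

Definition giter {O : wordType} (F : restr -> restr) : O -> restr :=
  Fix (@wo_wf O) (fun _ => restr) (@iter_body O F).

Definition relaxation (Rop F : restr -> restr) :=
  forall (O : wordType) (a : O),
    let G := giter Rop a in
    [/\ rsub (F G) (Rop G),
        rsub (F G) G -> rsub (Rop G) G
      & Rop G = G -> F G = G].

Definition is_outcome (F : restr -> restr) (G : restr) :=
  exists (O : wordType) (a : O),
    [/\ F (giter F a) = giter F a,
        forall b, wo_lt b a -> F (giter F b) <> giter F b
      & G = giter F a].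

Definition order_independent (F : restr -> restr) :=
  forall R1 R2 G1 G2, relaxation R1 F -> relaxation R2 F ->
    is_outcome R1 G1 -> is_outcome R2 G2 -> G1 = G2.

Definition MD {O : wordType} (a : O) :=
  forall Rop, relaxation Rop (barop MLS) ->
    let S := giter Rop a in
    forall i (si : M i), T i si ->
      (exists m : M i, dominates S i m si) ->
      exists m : M i, Delta i (S i) m /\ dominates S i m si.

End Game.

Arguments rsub {n M}.
Arguments upd {n M}.
Arguments dominates {n M R}.
Arguments MGS {n M} T {R}.
Arguments MLS {n M} T {R}.
Arguments barop {n M}.
Arguments iter_body {n M} T {O}.
Arguments giter {n M} T {O}.
Arguments relaxation {n M} T.
Arguments is_outcome {n M} T.
Arguments order_independent {n M} T.
Arguments MD {n M} T {R} p Delta {O}.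

(* Main.v *)
Require Import Defs.
From mathcomp Require Import all_boot all_order all_algebra.
From HB Require Import structures.
From mathcomp Require Import boolp classical_sets reals wochoice.


Unset Printing Implicit Defensive.
Local Open Scope classical_set_scope.

Lemma wf_min (A : Type) (Rl : A -> A -> Prop) (wf : well_founded Rl)
  (P : A -> Prop) x : P x -> exists y, P y /\ forall z, Rl z y -> ~ P z.
Proof.
move=> Px; apply: contrapT => H.
suff : forall y, ~ P y by move/(_ x).
move=> y; elim: (wf y) => {}y _ IH Py; apply: H; exists y; split => // z /IH.
Qed.

Section Generic.
Variables (n : nat) (M : 'I_n -> Type) (T : forall i, set (M i)).
Local Notation restr := (restr n M).

Lemma restr_ext (G1 G2 : restr) : (forall i x, G1 i x <-> G2 i x) -> G1 = G2.
Proof.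
move=> h; apply: functional_extensionality_dep => i.
apply: functional_extensionality_dep => x; exact: propext.
Qed.

Lemma is_pred_uniq {O : wordType} {b b' a : O} : is_pred b a -> is_pred b' a -> b = b'.
Proof.
move=> [ba hb] [b'a hb']; case: (wo_total _ b b') => [lt|[//|lt]].
- by case: hb; exists b'.
- by case: hb'; exists b.
Qed.

Lemma giterE (O : wordType) F (a : O) :
  giter T F a = iter_body T F a (fun b _ => giter T F b).
Proof.
rewrite /giter Fix_eq // => x f g fg.
have -> : f = g; last by [].
apply: functional_extensionality_dep => y; apply: functional_extensionality_dep => h.
exact: fg.
Qed.

Lemma giter_succ {O : wordType} {F} {a b : O} :
  is_pred b a -> giter T F a = F (giter T F b).
Proof.
move=> hb; rewrite giterE /iter_body; case: pselect => [h|h]; last by case: h; exists b.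
by rewrite /= (is_pred_uniq (proj2_sig (cid h)) hb).
Qed.

Lemma giter_lim {O : wordType} {F} {a : O} :
  ~ (exists b, is_pred b a) ->
  giter T F a = fun i => [set x : M i | T i x /\ forall b, wo_lt b a -> giter T F b i x].
Proof.
move=> hb; rewrite giterE /iter_body; case: pselect => [h|h] //.
Qed.

Section Defl.
Variables (O : wordType) (F : restr -> restr).
Hypothesis defl : forall a : O, rsub (F (giter T F a)) (giter T F a).

Lemma giter_subT (a : O) : rsub (giter T F a) T.
Proof.
move: a; apply: (well_founded_induction (@wo_wf O)) => a IH.
case: (pselect (exists b, is_pred b a)) => [[b hb]|hb].
- rewrite (giter_succ hb) => i x /defl; apply: IH; exact: hb.1.
- by rewrite (giter_lim hb) => i x [].
Qed.

Lemma giter_decF {a b : O} : wo_lt b a -> rsub (giter T F a) (F (giter T F b)).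
Proof.
move: a b; apply: (well_founded_induction (@wo_wf O)) => a IH b ba.
case: (pselect (exists c, is_pred c a)) => [[c hc]|hc].
- rewrite (giter_succ hc).
  case: (wo_total _ b c) => [bc|[bc|cb]].
  + move=> i x /defl /(IH c (proj1 hc) b bc); done.
  + by subst => i x.
  + move=> i x _; exfalso; case: hc => _; apply; by exists b; split.
- have [c [bc ca]] : exists c, wo_lt b c /\ wo_lt c a.
    apply: contrapT => nc; apply: hc; exists b; split => //.
  rewrite (giter_lim hc) => i x [_ /(_ c ca)]; exact: (IH c ca b bc).
Qed.

Lemma giter_dec {a b : O} : wo_lt b a -> rsub (giter T F a) (giter T F b).
Proof. by move=> ba i x /(giter_decF ba) /defl. Qed.

End Defl.
End Generic.
Arguments restr_ext {n M G1 G2}.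
Arguments giter_succ {n M T O F a b}.
Arguments giter_lim {n M T O F a}.
Arguments giter_subT {n M T O F}.
Arguments giter_decF {n M T O F}.
Arguments giter_dec {n M T O F}.

Section WO.
Variable (X : Type).
Definition WT := X -> Prop.
HB.instance Definition _ := gen_eqMixin WT.

Let Rw : rel WT := sval (well_ordering_principle WT).
Let Rwo : well_order Rw := svalP (well_ordering_principle WT).

Let min_seq {s : seq WT} {x : WT} : x \in s -> exists z, z \in s /\ forall w, w \in s -> Rw z w.
Proof.
move=> xs; have [|z [[zs lb] _]] := Rwo (mem s); first by exists x.
by exists z; split => // w ws; apply: lb.
Qed.

Let Rw_refl x : Rw x x.
Proof. by have [z [] ] := min_seq (mem_head x [::]); rewrite inE => /eqP -> /(_ x (mem_head _ _)). Qed.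

Let Rw_anti x y : Rw x y -> Rw y x -> x = y.
Proof.
move=> xy yx; have [|z [[zs lb] uz]] := Rwo (mem [:: x; y]); first by exists x; rewrite inE eqxx.
have ex : z = x.
  apply: uz; split; first by rewrite inE eqxx.
  by move=> w; rewrite !inE => /orP[] /eqP ->.
have ey : z = y.
  apply: uz; split; first by rewrite !inE eqxx orbT.
  by move=> w; rewrite !inE => /orP[] /eqP ->.
by rewrite -ex -ey.
Qed.

Let Rw_total x y : Rw x y \/ Rw y x.
Proof.
have [|z [zs lb]] := min_seq (x := x) (s := [:: x; y]); first by rewrite inE eqxx.
move: zs lb; rewrite !inE => /orP[] /eqP -> lb.
- by left; apply: lb; rewrite !inE eqxx orbT.
- by right; apply: lb; rewrite !inE eqxx.
Qed.

Let Rw_trans x y z : Rw x y -> Rw y z -> Rw x z.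
Proof.
move=> xy yz.
have [|m [ms lb]] := min_seq (x := x) (s := [:: x; y; z]); first by rewrite inE eqxx.
move: ms lb; rewrite !inE => /orP[/eqP -> lb|/orP[] /eqP -> lb].
- by apply: lb; rewrite !inE eqxx !orbT.
- have yx : Rw y x by apply: lb; rewrite !inE eqxx.
  by rewrite (Rw_anti _ _ xy yx).
- have zy : Rw z y by apply: lb; rewrite !inE eqxx !orbT.
  by rewrite -(Rw_anti _ _ yz zy).
Qed.

Definition wlt (x y : WT) := Rw x y /\ x <> y.

Lemma wlt_trans x y z : wlt x y -> wlt y z -> wlt x z.
Proof.
move=> [xy nxy] [yz nyz]; split; first exact: Rw_trans xy yz.
move=> exz; subst z; apply: nyz; exact: Rw_anti.
Qed.

Lemma wlt_total x y : wlt x y \/ x = y \/ wlt y x.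
Proof.
case: (pselect (x = y)) => [->|nxy]; first by right; left.
case: (Rw_total x y) => h; [left|right; right]; split => //; by move=> e; apply: nxy.
Qed.

Lemma wlt_wf : well_founded wlt.
Proof.
move=> a; apply: contrapT => na.
have [|m [[mA lb] _]] := Rwo [pred z | ~~ `[< Acc wlt z >]].
  by exists a; rewrite inE; apply/negP => /asboolP.
move: mA; rewrite inE => /negP; apply; apply/asboolP; constructor => y [ym nym].
apply: contrapT => ny; apply: nym; apply: Rw_anti => //; apply: lb.
by rewrite inE; apply/negP => /asboolP.
Qed.

Definition WO : wordType := @WOrd WT wlt wlt_wf wlt_trans wlt_total.
End WO.

Section Exist.
Variables (n : nat) (M : 'I_n -> Type) (T : forall i, set (M i)).
Local Notation restr := (restr n M).
Let X := {i : 'I_n & M i}.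
Let O := WO X.

Lemma exists_fix (F : restr -> restr) : (forall G, rsub (F G) G) ->
  exists a : O, F (giter T F a) = giter T F a.
Proof.
move=> defl; apply: contrapT => H.
have H' : forall a : O, exists y : X,
    giter T F a (projT1 y) (projT2 y) /\ ~ F (giter T F a) (projT1 y) (projT2 y).
  move=> a; apply: contrapT => Ha; apply: H; exists a.
  apply: restr_ext => i x; split; first exact: defl.
  move=> gx; apply: contrapT => nfx; apply: Ha; by exists (existT _ i x).
have [f hf] := choice H'.
have finj : forall a b : O, f a = f b -> a = b.
  have key : forall a b : O, wo_lt b a -> f a <> f b.
    move=> a b ba efab.
    have [ga _] := hf a; have [_ nfb] := hf b.
    apply: nfb; rewrite -efab.
    exact: (@giter_decF n M T O F (fun c => defl (giter T F c)) a b ba _ _ ga).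
  move=> a b eab; case: (wo_total _ a b) => [ab|[//|ba]].
  - by case: (key _ _ ab); rewrite eab.
  - by case: (key _ _ ba).
pose D : O := fun y => exists A : O, f A = y /\ ~ A y.
case: (pselect (D (f D))) => hD.
- have [A [eA nA]] : exists A : O, f A = f D /\ ~ A (f D) := hD.
  have eAD := finj _ _ eA. rewrite eAD in nA. exact: nA hD.
- have hE : exists A : O, f A = f D /\ ~ A (f D) by exists D.
  exact: hD hE.
Qed.

Lemma exists_outcome (F : restr -> restr) : (forall G, rsub (F G) G) ->
  exists G, is_outcome T F G.
Proof.
move=> defl; have [a0 ha0] := exists_fix F defl.
have [a [ha hmin]] := @wf_min O wo_lt (@wo_wf O) (fun a => F (giter T F a) = giter T F a) a0 ha0.
exists (giter T F a), O, a; split => //; move=> b ba; exact: hmin.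
Qed.
End Exist.

Section Game.
Variables (n : nat) (M : 'I_n -> Type) (T : forall i, set (M i)).
Variables (R : realType) (p : forall i : 'I_n, (forall j, M j) -> R).
Variable (Delta : forall i, set (M i) -> set (M i)).
Local Notation restr := (restr n M).
Local Notation MLSb := (barop (MLS T p Delta)).
Local Notation MGSb := (barop (MGS T p)).

Lemma dom_mono (G S : restr) i m si : rsub G S -> dominates p S i m si -> dominates p G i m si.
Proof. by move=> GS hd s hs; apply: hd => j ji; apply: GS; apply: hs. Qed.

Lemma barop_defl F (G : restr) : rsub (barop F G) G.
Proof. by move=> i x []. Qed.

Lemma relax_self F : relaxation T F F.
Proof. move=> O a /=; split; [by move=> ? ?|by []|by []]. Qed.

Lemma not_in_dom (O : wordType) (a : O) i si : T i si -> ~ giter T MLSb a i si ->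
  exists m, dominates p (giter T MLSb a) i m si.
Proof.
move=> Tsi; move: a; apply: (well_founded_induction (@wo_wf O)) => a IH.
case: (pselect (exists c, is_pred c a)) => [[c hc]|hc].
- rewrite (giter_succ hc) => nin.
  case: (pselect (giter T MLSb c i si)) => gc.
  + have [m [_ hm]] : exists m, Delta i (giter T MLSb c i) m /\ dominates p (giter T MLSb c) i m si.
      apply: contrapT => nm; apply: nin; split => //; split => //.
    exists m; apply: dom_mono hm; exact: barop_defl.
  + have [m hm] := IH c (proj1 hc) gc; exists m; apply: dom_mono hm; exact: barop_defl.
- rewrite (giter_lim hc) => nin.
  have [b [ba nb]] : exists b, wo_lt b a /\ ~ giter T MLSb b i si.
    apply: contrapT => nb; apply: nin; split => // b ba; apply: contrapT => nbb.
    by apply: nb; exists b.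
  have [m hm] := IH b ba nb; exists m; apply: dom_mono hm.
  have := @giter_dec n M T O MLSb (fun c => barop_defl _ _) a b ba.
  by rewrite (giter_lim hc).
Qed.

Lemma MGS_MLS_eq (O : wordType) (a : O) : MD T p Delta a ->
  MGSb (giter T MLSb a) = MLSb (giter T MLSb a).
Proof.
move=> hMD; apply: restr_ext => i x; split.
- move=> [[Tx nd] Gx]; split => //; split => // [[m [_ hm]]]; apply: nd; by exists m.
- move=> [[Tx nd] Gx]; split => //; split => // [[m hm]].
  have [m' hm'] := hMD MLSb (relax_self _) i x Tx (ex_intro _ m hm).
  apply: nd; by exists m'.
Qed.

Lemma MLS_eq (O : wordType) (a : O) : MD T p Delta a ->
  MLS T p Delta (giter T MLSb a) = MLSb (giter T MLSb a).
Proof.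
move=> hMD; apply: restr_ext => i x; split; last by case.
move=> [Tx nd]; split; first by split.
apply: contrapT => nG; have [m hm] := @not_in_dom O a i x Tx nG.
have [m' hm'] := hMD MLSb (relax_self _) i x Tx (ex_intro _ m hm).
apply: nd; by exists m'.
Qed.

Lemma part_i (O : wordType) (a : O) : (forall b, wo_lt b a -> MD T p Delta b) ->
  giter T MGSb a = giter T MLSb a.
Proof.
move: a; apply: (well_founded_induction (@wo_wf O)) => a IH hMD.
case: (pselect (exists c, is_pred c a)) => [[c hc]|hc].
- rewrite !(giter_succ hc) (IH c (proj1 hc)); last first.
    by move=> b bc; apply: hMD; apply: wo_trans bc (proj1 hc).
  exact: MGS_MLS_eq (hMD c (proj1 hc)).
- rewrite !(giter_lim hc); apply: restr_ext => i x; split => -[Tx h]; split => // b ba.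
  + rewrite -(IH b ba); first exact: h.
    by move=> b' b'b; apply: hMD; apply: wo_trans b'b ba.
  + rewrite (IH b ba); first exact: h.
    by move=> b' b'b; apply: hMD; apply: wo_trans b'b ba.
Qed.

Lemma part_iii (O : wordType) (a : O) : (forall b, wo_lt b a -> MD T p Delta b) ->
  giter T (MLS T p Delta) a = giter T MLSb a.
Proof.
move: a; apply: (well_founded_induction (@wo_wf O)) => a IH hMD.
case: (pselect (exists c, is_pred c a)) => [[c hc]|hc].
- rewrite !(giter_succ hc) (IH c (proj1 hc)); last first.
    by move=> b bc; apply: hMD; apply: wo_trans bc (proj1 hc).
  exact: MLS_eq (hMD c (proj1 hc)).
- rewrite !(giter_lim hc); apply: restr_ext => i x; split => -[Tx h]; split => // b ba.
  + rewrite -(IH b ba); first exact: h.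
    by move=> b' b'b; apply: hMD; apply: wo_trans b'b ba.
  + rewrite (IH b ba); first exact: h.
    by move=> b' b'b; apply: hMD; apply: wo_trans b'b ba.
Qed.

End Game.
Arguments dom_mono {n M R p G S i m si}.
Arguments barop_defl {n M F G}.

Section Game2.
Variables (n : nat) (M : 'I_n -> Type) (T : forall i, set (M i)).
Variables (R : realType) (p : forall i : 'I_n, (forall j, M j) -> R).
Variable (Delta : forall i, set (M i) -> set (M i)).
Local Notation restr := (restr n M).
Local Notation MLSb := (barop (MLS T p Delta)).
Local Notation MGSb := (barop (MGS T p)).

Lemma outcome_eq (Rop : restr -> restr) (hrel : relaxation T Rop MLSb)
  (MDall : forall (O : wordType) (a : O), MD T p Delta a)
  (Os : wordType) (a0 : Os) (hGs : MGSb (giter T MGSb a0) = giter T MGSb a0) G :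
  is_outcome T Rop G -> G = giter T MGSb a0.
Proof.
move=> [O [a [hfix _ ->]]].
have deflR : forall c : O, rsub (Rop (giter T Rop c)) (giter T Rop c).
  by move=> c; have [_ h2 _] := hrel O c; apply: h2; apply: barop_defl.
have h3 : MLSb (giter T Rop a) = giter T Rop a.
  by have [_ _ h] := hrel O a; apply: h.
have GT := giter_subT deflR a.
have GsT := giter_subT (fun c => @barop_defl n M (MGS T p) (giter T MGSb c)) a0.
apply: restr_ext => i x; split.
- move: i x; move: a0 {hGs GsT}; apply: (well_founded_induction (@wo_wf Os)) => c IH.
  case: (pselect (exists d, is_pred d c)) => [[d hd]|hd].
  + rewrite (giter_succ hd) => i x Gx; split; last exact: IH d (proj1 hd) i x Gx.
    split; first exact: GT.
    move=> [m hm]; have hmG : dominates p (giter T Rop a) i m x.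
      apply: dom_mono hm; exact: IH d (proj1 hd).
    have [m' hm'] := MDall O a Rop hrel i x (GT i x Gx) (ex_intro _ m hmG).
    move: Gx; rewrite -{1}h3 => -[[_ nd] _]; apply: nd; by exists m'.
  + rewrite (giter_lim hd) => i x Gx; split; first exact: GT.
    move=> b bc; exact: IH b bc i x Gx.
- have key : forall c : O, rsub (giter T MGSb a0) (giter T Rop c).
    apply: (well_founded_induction (@wo_wf O)) => c IH.
    case: (pselect (exists d, is_pred d c)) => [[d hd]|hd].
    + rewrite (giter_succ hd) => j y Gy.
      have [h1 _ _] := hrel O d; apply: h1; split; last exact: IH d (proj1 hd) j y Gy.
      split; first exact: GsT.
      move=> [m [_ hm]]; move: Gy; rewrite -{1}hGs => -[[_ nd] _]; apply: nd.
      exists m; apply: dom_mono hm; exact: IH d (proj1 hd).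
    + rewrite (giter_lim hd) => j y Gy; split; first exact: GsT.
      move=> b bc; exact: IH b bc j y Gy.
  exact: key a i x.
Qed.

End Game2.

Theorem mainTheorem12 (n : nat) (M : 'I_n -> Type) (T : forall i, set (M i))
  (R : realType) (p : forall i : 'I_n, (forall j, M j) -> R)
  (Delta : forall i, set (M i) -> set (M i))
  (hDelta : forall i, Delta i (T i) = setT) :
  let MGSb := barop (MGS T p) in
  let MLSb := barop (MLS T p Delta) in
  let MDall := forall (O : wordType) (a : O), MD T p Delta a in
  [/\ (* (i) *)
      (forall (O : wordType) (a : O),
         (forall b, wo_lt b a -> MD T p Delta b) ->
         giter T MGSb a = giter T MLSb a),
      MDall -> exists G, is_outcome T MGSb G /\ is_outcome T MLSb G,
      (* (ii) *)
      MDall -> order_independent T MLSb,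
      (* (iii) *)
      (forall (O : wordType) (a : O),
         (forall b, wo_lt b a \/ b = a -> MD T p Delta b) ->
         giter T (MLS T p Delta) a = giter T MLSb a)
    & MDall -> exists G, is_outcome T (MLS T p Delta) G /\ is_outcome T MLSb G].
Proof.
cbv zeta; split.
- move=> O a h; exact: (@part_i n M T R p Delta O a h).
- move=> hMD.
  have [G [O [a [hfix hmin eG]]]] :=
    @exists_outcome n M T (barop (MLS T p Delta)) (fun G => barop_defl).
  exists G; split; last by exists O, a.
  have eq (c : O) : giter T (barop (MGS T p)) c = giter T (barop (MLS T p Delta)) c.
    exact: (@part_i n M T R p Delta O c (fun b _ => hMD O b)).
  exists O, a; split.
  + by rewrite eq (@MGS_MLS_eq n M T R p Delta O a (hMD O a)).
  + move=> b ba; rewrite eq (@MGS_MLS_eq n M T R p Delta O b (hMD O b)); exact: hmin.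
  + by rewrite eq.
- move=> hMD R1 R2 G1 G2 h1 h2 o1 o2.
  have [Gs [Os [a0 [hfix _ eGs]]]] :=
    @exists_outcome n M T (barop (MGS T p)) (fun G => barop_defl).
  rewrite (@outcome_eq n M T R p Delta R1 h1 hMD Os a0 hfix G1 o1).
  by rewrite (@outcome_eq n M T R p Delta R2 h2 hMD Os a0 hfix G2 o2).
- move=> O a h; apply: (@part_iii n M T R p Delta O a) => b ba; apply: h; by left.
- move=> hMD.
  have [G [O [a [hfix hmin eG]]]] :=
    @exists_outcome n M T (barop (MLS T p Delta)) (fun G => barop_defl).
  exists G; split; last by exists O, a.
  have eq (c : O) : giter T (MLS T p Delta) c = giter T (barop (MLS T p Delta)) c.
    exact: (@part_iii n M T R p Delta O c (fun b _ => hMD O b)).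
  exists O, a; split.
  + by rewrite eq (@MLS_eq n M T R p Delta O a (hMD O a)).
  + move=> b ba; rewrite eq (@MLS_eq n M T R p Delta O b (hMD O b)); exact: hmin.
  + by rewrite eq.
Qed.
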